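(* There is an absolute constant $c$ such that the following holds. Let $T$ be an orientation-preserving Möbius automorphism of the upper half plane $\mathbb H$, and let $z\in\mathbb C$ with $i+z\in\mathbb H$ and $T(i+z)=i$. Let $v,w\in\partial\mathbb U$. If $|z|\le1/3$ then $$\operatorname{ash}(T,v,w)=\Re\Big[(\bar w-\bar v)\Big(-z-\tfrac{i(2+\bar v+\bar w)}{4}z^2\Big)\Big]+\varepsilon_3=-\Re\big[(\bar w-\bar v)z\big]+\varepsilon_2=\varepsilon_1,$$ where $|\varepsilon_d|\le c|w-v||z|^d\le 2c|z|^d$ for $d=1,2,3$. If $v=-1$, the same bounds hold without the assumption $|z|\le1/3$.
   Context: $\mathbb U$ is the open unit disk; $U(r)=\frac{i-r}{i+r}$ maps $\overline{\mathbb H}$ bijectively onto $\overline{\mathbb U}$ (with $U(\infty)=-1$), sending $i$ to $0$. A Möbius automorphism $T$ of $\mathbb H$ acts on $\overline{\mathbb U}$ by $\hat T=U\circ T\circ U^{-1}$. For $v,w\in\partial\mathbb U$, $\operatorname{ash}(T,v,w)=\operatorname{Arg}_{[0,2\pi)}(\hat T(w)/\hat T(v))-\operatorname{Arg}_{[0,2\pi)}(w/v)$, with $\operatorname{Arg}_{[0,2\pi)}$ the argument in $[0,2\pi)$. *)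

(* Defs.v *)
From Stdlib Require Import Reals.
Open Scope R_scope.

Definition Cx : Type := (R * R)%type.
Definition Re (z : Cx) : R := fst z.
Definition Im (z : Cx) : R := snd z.
Definition Cof (x : R) : Cx := (x, 0).
Definition Ci : Cx := (0, 1).
Definition Cadd (z w : Cx) : Cx := (Re z + Re w, Im z + Im w).
Definition Copp (z : Cx) : Cx := (- Re z, - Im z).
Definition Csub (z w : Cx) : Cx := Cadd z (Copp w).
Definition Cmul (z w : Cx) : Cx :=
  (Re z * Re w - Im z * Im w, Re z * Im w + Im z * Re w).
Definition Cconj (z : Cx) : Cx := (Re z, - Im z).
Definition Cnorm (z : Cx) : R := sqrt (Re z * Re z + Im z * Im z).
Definition Cinv (z : Cx) : Cx :=
  let n2 := Re z * Re z + Im z * Im z in (Re z / n2, - Im z / n2).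
Definition Cdiv (z w : Cx) : Cx := Cmul z (Cinv w).

(* Argument in [0, 2*PI) (with the arbitrary convention Arg 0 = 0). *)
Definition Arg02pi (z : Cx) : R :=
  let r := Cnorm z in
  if Req_EM_T r 0 then 0
  else if Rle_dec 0 (Im z) then acos (Re z / r)
  else 2 * PI - acos (Re z / r).

(* Riemann sphere: None is the point at infinity. *)
Definition Ext : Type := option Cx.

Definition mobius (a b c d : Cx) (p : Ext) : Ext :=
  match p with
  | Some z => let den := Cadd (Cmul c z) d in
      if Req_EM_T (Cnorm den) 0 then None
      else Some (Cdiv (Cadd (Cmul a z) b) den)
  | None => if Req_EM_T (Cnorm c) 0 then None else Some (Cdiv a c)
  end.

(* Orientation-preserving Moebius automorphism of H: r |-> (a r + b)/(c r + d)
   with a b c d real and a d - b c > 0. *)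
Definition mobH (a b c d : R) : Ext -> Ext :=
  mobius (Cof a) (Cof b) (Cof c) (Cof d).

Definition inH (z : Cx) : Prop := 0 < Im z.

(* U(r) = (i - r)/(i + r) = (-r + i)/(r + i), U(infinity) = -1 *)
Definition Umap : Ext -> Ext := mobius (Cof (-1)) Ci (Cof 1) Ci.
(* U^{-1}(w) = i(1 - w)/(1 + w), U^{-1}(-1) = infinity *)
Definition Uinv : Ext -> Ext := mobius (Copp Ci) Ci (Cof 1) (Cof 1).

Definition ext_val (p : Ext) : Cx := match p with Some z => z | None => (0, 0) end.

(* hat T = U o T o U^{-1}, evaluated at a finite point of the closed disk *)
Definition That (a b c d : R) (w : Cx) : Cx :=
  ext_val (Umap (mobH a b c d (Uinv (Some w)))).

Definition ash (a b c d : R) (v w : Cx) : R :=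
  Arg02pi (Cdiv (That a b c d w) (That a b c d v)) - Arg02pi (Cdiv w v).

(* Main.v *)
Require Import Defs.
From Stdlib Require Import Reals Lra Psatz Machin.
Open Scope R_scope.

Lemma atan_le_id : forall x, 0 <= x -> atan x <= x.
Proof.
  intros x Hx.
  set (f := fun t => t - atan t).
  assert (pr : derivable f).
  { intro t. unfold f. apply derivable_pt_minus. apply derivable_pt_id. apply derivable_pt_atan. }
  assert (Hinc : increasing f).
  { apply (nonneg_derivative_1 f pr). intro t.
    assert (L : derivable_pt_lim f t (1 - / (1 + t^2))).
    { unfold f. apply derivable_pt_lim_minus. apply derivable_pt_lim_id. apply derivable_pt_lim_atan. }
    rewrite (derive_pt_eq_0 _ _ _ _ L).
    assert (0 < 1 + t^2) by nra.
    assert (/ (1 + t^2) <= 1).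
    { rewrite <- Rinv_1. apply Rinv_le_contravar; nra. }
    lra. }
  assert (f 0 <= f x) by (apply Hinc; lra).
  unfold f in H. rewrite atan_0 in H. lra.
Qed.

Lemma atan_cube : forall x, 0 <= x -> x - x^3/3 <= atan x.
Proof.
  intros x Hx.
  set (f := fun t => atan t - t + t^3/3).
  assert (pr : derivable f).
  { intro t. unfold f. apply derivable_pt_plus. apply derivable_pt_minus.
    apply derivable_pt_atan. apply derivable_pt_id.
    apply (derivable_pt_mult (fun t => t^3) (fun _ => /3)). apply derivable_pt_pow. apply derivable_pt_const. }
  assert (Hinc : increasing f).
  { apply (nonneg_derivative_1 f pr). intro t.
    assert (L : derivable_pt_lim f t (/ (1 + t^2) - 1 + (INR 3 * t^(3-1) * /3 + t^3 * 0))).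
    { unfold f. apply derivable_pt_lim_plus. apply derivable_pt_lim_minus.
      apply derivable_pt_lim_atan. apply derivable_pt_lim_id.
      apply (derivable_pt_lim_mult (fun t => t^3) (fun _ => /3)). apply derivable_pt_lim_pow. apply derivable_pt_lim_const. }
    rewrite (derive_pt_eq_0 _ _ _ _ L).
    assert (0 < 1 + t^2) by nra.
    assert (E : / (1 + t ^ 2) - 1 + (INR 3 * t^(3-1) * / 3 + t ^ 3 * 0) = t^4 / (1 + t^2)) by (simpl; field; lra).
    rewrite E. apply Rmult_le_pos. nra. left; apply Rinv_0_lt_compat; lra. }
  assert (f 0 <= f x) by (apply Hinc; lra).
  unfold f in H. rewrite atan_0 in H. lra.
Qed.

Lemma atan_abs_le : forall x, Rabs (atan x) <= Rabs x.
Proof.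
  intros x. destruct (Rle_dec 0 x) as [H|H].
  - pose proof (atan_le_id x H). assert (0 <= atan x).
    { destruct H as [H|H]. left. rewrite <- atan_0. apply atan_increasing; auto. subst; rewrite atan_0; lra. }
    rewrite !Rabs_right; lra.
  - assert (0 <= -x) by lra. pose proof (atan_le_id (-x) H0). rewrite atan_opp in H1.
    assert (atan x <= 0).
    { left. rewrite <- atan_0. apply atan_increasing; lra. }
    rewrite !Rabs_left1; lra.
Qed.

Lemma atan_taylor : forall x, Rabs (atan x - x) <= Rabs x ^ 3 / 3.
Proof.
  intros x. destruct (Rle_dec 0 x) as [H|H].
  - pose proof (atan_le_id x H). pose proof (atan_cube x H).
    rewrite Rabs_left1 by lra. rewrite Rabs_right by lra. lra.
  - assert (0 <= -x) by lra. pose proof (atan_le_id (-x) H0). pose proof (atan_cube (-x) H0).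
    rewrite atan_opp in H1, H2.
    rewrite Rabs_right by lra. rewrite Rabs_left by lra. lra.
Qed.

Lemma atan_diff_bound : forall x y, 1 + x * y > 0 -> -PI/2 < atan x - atan y < PI/2.
Proof.
  intros x y Hxy.
  pose proof (atan_bound x). pose proof (atan_bound y).
  assert (Hc : cos (atan x - atan y) > 0).
  { rewrite cos_minus, !cos_atan, !sin_atan.
    assert (0 < sqrt (1 + x²)) by (apply sqrt_lt_R0; unfold Rsqr; nra).
    assert (0 < sqrt (1 + y²)) by (apply sqrt_lt_R0; unfold Rsqr; nra).
    replace (1 / sqrt (1 + x²) * (1 / sqrt (1 + y²)) + x / sqrt (1 + x²) * (y / sqrt (1 + y²)))
      with ((1 + x*y) / (sqrt (1 + x²) * sqrt (1 + y²))) by (field; lra).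
    apply Rdiv_lt_0_compat; nra. }
  split.
  - destruct (Rlt_dec (-PI/2) (atan x - atan y)) as [h|h]; auto.
    exfalso. assert (cos (atan x - atan y) <= 0).
    { rewrite <- cos_neg. apply cos_le_0; lra. }
    lra.
  - destruct (Rlt_dec (atan x - atan y) (PI/2)) as [h|h]; auto.
    exfalso. assert (cos (atan x - atan y) <= 0) by (apply cos_le_0; lra). lra.
Qed.

Lemma atan_minus_formula : forall x y, 1 + x * y > 0 ->
  atan x - atan y = atan ((x - y) / (1 + x * y)).
Proof.
  intros x y H.
  pose proof (atan_sub_correct x y ltac:(lra) (atan_diff_bound x y H) (atan_bound _)).
  unfold atan_sub in H0. lra.
Qed.

Lemma Cnorm_pair : forall x y, Cnorm (x, y) = sqrt (x*x + y*y).
Proof. reflexivity. Qed.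

Lemma Arg_cos_sin : forall phi, 0 <= phi < 2 * PI -> Arg02pi (cos phi, sin phi) = phi.
Proof.
  intros phi Hphi. unfold Arg02pi. rewrite Cnorm_pair.
  assert (E1 : cos phi * cos phi + sin phi * sin phi = 1).
  { pose proof (sin2_cos2 phi). unfold Rsqr in H. lra. }
  rewrite E1, sqrt_1. simpl.
  destruct (Req_EM_T 1 0) as [h|_]; [lra|].
  replace (cos phi / 1) with (cos phi) by field.
  destruct (Rle_dec 0 (sin phi)) as [Hs|Hs].
  - apply acos_cos. split; [lra|].
    destruct (Rle_dec phi PI) as [h|h]; auto.
    exfalso. assert (sin phi < 0) by (apply sin_lt_0; lra). lra.
  - assert (PI < phi).
    { destruct (Rlt_dec PI phi) as [h|h]; auto. exfalso. apply Hs. apply sin_ge_0; lra. }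
    assert (cos phi = cos (2*PI - phi)).
    { rewrite cos_minus, cos_2PI, sin_2PI. ring. }
    rewrite H0, acos_cos; [ring|]. pose proof PI_RGT_0. lra.
Qed.

Lemma Arg_one : Arg02pi (1, 0) = 0.
Proof.
  unfold Arg02pi. rewrite Cnorm_pair.
  replace (1*1+0*0) with 1 by ring. rewrite sqrt_1. simpl.
  destruct (Req_EM_T 1 0) as [h|_]; [lra|].
  destruct (Rle_dec 0 0) as [_|h]; [|lra].
  replace (1/1) with 1 by field. apply acos_1.
Qed.

Lemma cos_2atan : forall t, cos (2 * atan t) = (1 - t*t)/(1 + t*t).
Proof.
  intro t. rewrite cos_2a, cos_atan, sin_atan.
  assert (Hp : 0 < 1 + t²) by (unfold Rsqr; nra).
  assert (Hs : sqrt (1 + t²) * sqrt (1 + t²) = 1 + t²) by (apply sqrt_sqrt; lra).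
  assert (0 < sqrt (1 + t²)) by (apply sqrt_lt_R0; lra).
  replace (1 / sqrt (1 + t²) * (1 / sqrt (1 + t²)) - t / sqrt (1 + t²) * (t / sqrt (1 + t²)))
    with ((1 - t*t) / (sqrt (1 + t²) * sqrt (1 + t²))) by (field; lra).
  rewrite Hs. reflexivity.
Qed.

Lemma sin_2atan : forall t, sin (2 * atan t) = 2 * t/(1 + t*t).
Proof.
  intro t. rewrite sin_2a, cos_atan, sin_atan.
  assert (Hp : 0 < 1 + t²) by (unfold Rsqr; nra).
  assert (Hs : sqrt (1 + t²) * sqrt (1 + t²) = 1 + t²) by (apply sqrt_sqrt; lra).
  assert (0 < sqrt (1 + t²)) by (apply sqrt_lt_R0; lra).
  replace (2 * (t / sqrt (1 + t²)) * (1 / sqrt (1 + t²)))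
    with ((2 * t) / (sqrt (1 + t²) * sqrt (1 + t²))) by (field; lra).
  rewrite Hs. reflexivity.
Qed.

Lemma Arg_half : forall X Y, Y <> 0 ->
  Arg02pi ((X*X - Y*Y)/(X*X+Y*Y), 2*X*Y/(X*X+Y*Y)) = PI - 2 * atan (X / Y).
Proof.
  intros X Y HY.
  pose proof (atan_bound (X/Y)).
  assert (0 < Y*Y) by nra.
  assert (Hc : cos (PI - 2 * atan (X/Y)) = (X*X - Y*Y)/(X*X+Y*Y)).
  { rewrite cos_minus, cos_PI, sin_PI, cos_2atan. field. split; nra. }
  assert (Hsn : sin (PI - 2 * atan (X/Y)) = 2*X*Y/(X*X+Y*Y)).
  { rewrite sin_minus, cos_PI, sin_PI, sin_2atan. field. split; nra. }
  rewrite <- Hc, <- Hsn. apply Arg_cos_sin. lra.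
Qed.

Definition Uh (W1 W2 : R) : Cx :=
  ((W2*W2 - W1*W1)/(W1*W1+W2*W2), 2*W1*W2/(W1*W1+W2*W2)).

Lemma ratio_Uh : forall W1 W2 V1 V2, W1*W1+W2*W2 <> 0 -> V1*V1+V2*V2 <> 0 ->
  Cdiv (Uh W1 W2) (Uh V1 V2) =
  (let X := W1*V1+W2*V2 in let Y := W1*V2 - V1*W2 in
   ((X*X - Y*Y)/(X*X+Y*Y), 2*X*Y/(X*X+Y*Y))).
Proof.
  intros W1 W2 V1 V2 HW HV. simpl.
  assert (HXY : (W1*V1+W2*V2)*(W1*V1+W2*V2) + (W1*V2 - V1*W2)*(W1*V2 - V1*W2) = (W1*W1+W2*W2)*(V1*V1+V2*V2)) by ring.
  assert (Hn : (W1*V1+W2*V2)*(W1*V1+W2*V2) + (W1*V2 - V1*W2)*(W1*V2 - V1*W2) <> 0).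
  { rewrite HXY. apply Rmult_integral_contrapositive; auto. }
  assert (HV2 : (V2 * V2 - V1 * V1) * (V2 * V2 - V1 * V1) + 2 * V1 * V2 * (2 * V1 * V2) <> 0).
  { replace ((V2 * V2 - V1 * V1) * (V2 * V2 - V1 * V1) + 2 * V1 * V2 * (2 * V1 * V2)) with ((V1*V1+V2*V2)*(V1*V1+V2*V2)) by ring.
    apply Rmult_integral_contrapositive; auto. }
  unfold Cdiv, Cmul, Cinv, Uh, Re, Im; simpl.
  f_equal; field; auto.
Qed.

Ltac cx := unfold Cdiv, Csub, Cinv, Cmul, Cadd, Copp, Cconj, Cof, Ci, Uh, Re, Im; simpl.
Ltac cxin H := unfold Cdiv, Csub, Cinv, Cmul, Cadd, Copp, Cconj, Cof, Ci, Uh, Re, Im in H; simpl in H.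

Lemma ssq_ne : forall x y, y*y > 0 -> x*x + y*y <> 0.
Proof. intros. apply Rgt_not_eq. pose proof (Rle_0_sqr x). unfold Rsqr in *. lra. Qed.

Lemma Cnorm_0 : forall x y, Cnorm (x, y) = 0 -> x = 0 /\ y = 0.
Proof.
  intros x y H. rewrite Cnorm_pair in H. apply sqrt_eq_0 in H; [|nra]. split; nra.
Qed.

Lemma Cnorm_0' : forall x y, x = 0 -> y = 0 -> Cnorm (x, y) = 0.
Proof. intros; subst. rewrite Cnorm_pair. replace (0*0+0*0) with 0 by ring. apply sqrt_0. Qed.

Lemma Umap_real : forall u, Im u = 0 -> ext_val (Umap (Some u)) = Uh (Re u) 1.
Proof.
  intros [x y] Hy. simpl in Hy. subst. unfold Umap, mobius; cx.
  destruct (Req_EM_T _ 0) as [H|H].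
  - apply Cnorm_0 in H. lra.
  - simpl. f_equal; field; nra.
Qed.

Lemma That_Uh : forall a b c d p q, a*d - b*c <> 0 -> 0 < p*p+q*q ->
  That a b c d (Uh p q) = Uh (a*p+b*q) (c*p+d*q).
Proof.
  intros a b c d p q Hdet Hpq.
  unfold That, Uinv, mobius.
  destruct (Req_EM_T _ 0) as [H0|H0].
  -
    cxin H0. apply Cnorm_0 in H0. destruct H0 as [H0 _].
    assert (Hq : q = 0).
    { assert (q*q = 0); [|nra].
      replace (q*q) with ((1 * ((q * q - p * p) / (p * p + q * q)) - 0 * (2 * p * q / (p * p + q * q)) + 1) * (p*p+q*q)/2) by (field; lra).
      rewrite H0. field. }
    subst q.
    assert (Hp : p*p <> 0) by lra.
    unfold mobH, mobius.
    destruct (Req_EM_T (Cnorm (Cof c)) 0) as [Hc|Hc].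
    + unfold Cof in Hc. apply Cnorm_0 in Hc. destruct Hc as [Hc _]. subst c.
      unfold Umap, mobius. destruct (Req_EM_T _ 0) as [H1|H1].
      * unfold Cof in H1. apply Cnorm_0 in H1. lra.
      * unfold ext_val. cx.
        assert (a <> 0) by (intro; subst; apply Hdet; ring).
        f_equal; field; nra.
    + assert (c <> 0) by (intro; subst; apply Hc; apply Cnorm_0'; reflexivity).
      rewrite Umap_real.
      * cx. assert (c*c>0) by nra. f_equal; field; repeat split; try nra.
      * cx. field. auto.
  - assert (Hq : q <> 0).
    { intro; subst q. apply H0. cx. apply Cnorm_0'; field; nra. }
    assert (Hqq : q*q > 0) by (pose proof (Rsqr_pos_lt q Hq); unfold Rsqr in *; lra).
    unfold mobH, mobius.
    set (r := Cdiv _ _ ).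
    assert (Hr : r = (p/q, 0)).
    { unfold r; cx. f_equal; field; repeat split; nra. }
    rewrite Hr.
    destruct (Req_EM_T _ 0) as [H1|H1].
    + cxin H1. apply Cnorm_0 in H1. destruct H1 as [H1 _].
      assert (Hcd : c*p + d*q = 0).
      { replace (c*p+d*q) with (q * (c * (p/q) - 0*0 + d)) by (field; auto). rewrite H1; ring. }
      assert (Hab : a*p + b*q <> 0).
      { intro Hab. apply Hdet. apply (Rmult_eq_reg_r q); [|auto].
        replace ((a*d-b*c)*q) with (a*(c*p+d*q) - c*(a*p+b*q)) by ring. rewrite Hcd, Hab; ring. }
      unfold Umap, mobius. destruct (Req_EM_T _ 0) as [H2|H2].
      * unfold Cof in H2. apply Cnorm_0 in H2. lra.
      * unfold ext_val. cx. rewrite Hcd.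
        f_equal; field; nra.
    + assert (Hcr : c * (p/q) + d <> 0).
      { intro E. apply H1. cx. apply Cnorm_0'; lra. }
      assert (Hcd : c*p + d*q <> 0).
      { intro E. apply Hcr. replace (c*(p/q)+d) with ((c*p+d*q)/q) by (field; auto). rewrite E. field. auto. }
      rewrite Umap_real.
      * cx.
        assert ((c*p+d*q)*(c*p+d*q) > 0) by (pose proof (Rsqr_pos_lt _ Hcd); unfold Rsqr in *; lra).
        f_equal; field; repeat split; auto; apply ssq_ne; auto.
      * cx. field. auto.
Qed.

Lemma Arg_ratio_zero : forall X Y, Y = 0 -> X*X+Y*Y <> 0 ->
  Arg02pi ((X*X - Y*Y)/(X*X+Y*Y), 2*X*Y/(X*X+Y*Y)) = 0.
Proof.
  intros X Y HY HX. subst Y.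
  replace ((X*X - 0*0)/(X*X+0*0), 2*X*0/(X*X+0*0)) with (1,0).
  apply Arg_one. f_equal; field; intro; apply HX; nra.
Qed.

Lemma W_nonzero : forall a b c d p q, a*d - b*c <> 0 -> 0 < p*p+q*q ->
  (a*p+b*q)*(a*p+b*q) + (c*p+d*q)*(c*p+d*q) <> 0.
Proof.
  intros a b c d p q Hdet Hpq E.
  pose proof (Rle_0_sqr (a*p+b*q)). pose proof (Rle_0_sqr (c*p+d*q)). unfold Rsqr in *.
  assert (E1 : a*p+b*q = 0). { assert (X: (a*p+b*q)*(a*p+b*q) = 0) by lra. apply Rmult_integral in X. tauto. }
  assert (E2 : c*p+d*q = 0). { assert (X: (c*p+d*q)*(c*p+d*q) = 0) by lra. apply Rmult_integral in X. tauto. }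
  assert (Ep : (a*d-b*c)*p = 0).
  { replace ((a*d-b*c)*p) with (d*(a*p+b*q) - b*(c*p+d*q)) by ring. rewrite E1, E2; ring. }
  assert (Eq : (a*d-b*c)*q = 0).
  { replace ((a*d-b*c)*q) with (a*(c*p+d*q) - c*(a*p+b*q)) by ring. rewrite E1, E2; ring. }
  apply Rmult_integral in Ep. apply Rmult_integral in Eq.
  destruct Ep; [auto|]. destruct Eq; [auto|]. subst; lra.
Qed.

Section Formula.
Variables (a c z1 z2 pw qw pv qv : R).
Let h := 1 + z2.
Let b := - c * h - a * z1.
Let d := a * h - c * z1.
Let Dl := pw*qv - pv*qw.
Let A0 := pw*pv + qw*qv.
Let A1 := (pw - z1*qw)*(pv - z1*qv) + h*h*qw*qv.

Lemma ash_formula : 0 < h -> a*d - b*c > 0 -> pw*pw+qw*qw = 1 -> pv*pv+qv*qv = 1 ->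
  ash a b c d (Uh pv qv) (Uh pw qw) =
  if Req_EM_T Dl 0 then 0 else 2 * (atan (A0/Dl) - atan (A1/(h*Dl))).
Proof.
  intros Hh Hdet Hw Hv.
  assert (Hdet' : a*d - b*c <> 0) by lra.
  unfold ash. rewrite !That_Uh by lra.
  rewrite !ratio_Uh by (try lra; apply W_nonzero; lra).
  cbv zeta.
  assert (EY : (a * pw + b * qw) * (c * pv + d * qv) - (a * pv + b * qv) * (c * pw + d * qw) = (a*d-b*c) * Dl).
  { unfold Dl. ring. }
  destruct (Req_EM_T Dl 0) as [HD|HD].
  - rewrite !Arg_ratio_zero; try lra.
    + unfold Dl in HD; lra.
    + replace ((pw * pv + qw * qv) * (pw * pv + qw * qv) + (pw * qv - pv * qw) * (pw * qv - pv * qw)) with ((pw*pw+qw*qw)*(pv*pv+qv*qv)) by ring. nra.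
    + rewrite EY, HD. ring.
    + rewrite EY, HD. replace ((a*d-b*c)*0) with 0 by ring.
      intro E. assert (E' : (a * pw + b * qw) * (c * pv + d * qv) - (a * pv + b * qv) * (c * pw + d * qw) = 0) by (rewrite EY, HD; ring).
      assert (W1: (a*pw+b*qw)*(a*pw+b*qw) + (c*pw+d*qw)*(c*pw+d*qw) <> 0) by (apply W_nonzero; lra).
      assert (W2: (a*pv+b*qv)*(a*pv+b*qv) + (c*pv+d*qv)*(c*pv+d*qv) <> 0) by (apply W_nonzero; lra).
      apply (Rmult_integral_contrapositive _ _ (conj W1 W2)).
      lazymatch goal with E: ?X * ?X + 0 * 0 = 0 |- _ = 0 => transitivity (X*X + ((a * pw + b * qw) * (c * pv + d * qv) - (a * pv + b * qv) * (c * pw + d * qw))^2); [ring| rewrite E'; lra] end.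
  - rewrite !Arg_half.
    + assert (EX : ((a * pw + b * qw) * (a * pv + b * qv) + (c * pw + d * qw) * (c * pv + d * qv)) /
                   ((a * pw + b * qw) * (c * pv + d * qv) - (a * pv + b * qv) * (c * pw + d * qw)) = A1 / (h * Dl)).
      { rewrite EY. assert (a*a+c*c > 0).
        { assert (a*d-b*c = h*(a*a+c*c)) by (unfold d, b; ring). destruct (Rle_dec (a*a+c*c) 0); [|lra]. nra. }
        assert (a*d-b*c = h*(a*a+c*c)) by (unfold d, b; ring).
        rewrite H0. unfold A1, b, d. field. repeat split; lra. }
      rewrite EX. fold Dl. fold A0. ring.
    + fold Dl; auto.
    + rewrite EY. apply Rmult_integral_contrapositive. split; lra.
Qed.
End Formula.

Definition Dl (pw qw pv qv : R) := pw*qv - pv*qw.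
Definition A0 (pw qw pv qv : R) := pw*pv + qw*qv.
Definition ReW (pw qw pv qv : R) := qw*qv - pw*pv.
Definition ImW (pw qw pv qv : R) := pw*qv + qw*pv.
Definition G1 (z1 z2 pw qw pv qv : R) := z1 * ImW pw qw pv qv - z2 * ReW pw qw pv qv.
Definition G2 (z1 z2 pw qw pv qv : R) := -(z1*z1+z2*z2)*qw*qv.
Definition X1 (pw qw pv qv : R) := (2)*qw*qv + (1)*qw*qv^3 + (-3)*qw*pv^2*qv + (1)*qw^3*qv + (-2)*pw*pv + (-3)*pw*pv*qv^2 + (1)*pw*pv^3 + (-3)*pw*qw^2*pv + (-3)*pw^2*qw*qv + (1)*pw^3*pv.
Definition X2 (pw qw pv qv : R) := (-2)*qw*pv + (-3)*qw*pv*qv^2 + (1)*qw*pv^3 + (-1)*qw^3*pv + (-2)*pw*qv + (-1)*pw*qv^3 + (3)*pw*pv^2*qv + (-3)*pw*qw^2*qv + (3)*pw^2*qw*pv + (1)*pw^3*qv.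
Definition Pi2 (z1 z2 pw qw pv qv : R) :=
  -(1/2) * (X1 pw qw pv qv * (z1*z1 - z2*z2) - X2 pw qw pv qv * (2*z1*z2)).

Ltac dfs := unfold Pi2, G1, G2, Dl, A0, ReW, ImW, X1, X2.

Section Ids.
Variables (z1 z2 pw qw pv qv : R).
Hypothesis Hw : pw*pw + qw*qw = 1.
Hypothesis Hv : pv*pv + qv*qv = 1.
Let cw := pw*pw + qw*qw - 1.
Let cv := pv*pv + qv*qv - 1.
Lemma cw0 : cw = 0. Proof. unfold cw; lra. Qed.
Lemma cv0 : cv = 0. Proof. unfold cv; lra. Qed.

Lemma Re3_eq : Re (Cmul (Csub (Cconj (qw*qw - pw*pw, 2*pw*qw)) (Cconj (qv*qv - pv*pv, 2*pv*qv)))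
   (Csub (Copp (z1, z2))
      (Cmul (Cdiv (Cmul Ci (Cadd (Cadd (Cof 2) (Cconj (qv*qv - pv*pv, 2*pv*qv))) (Cconj (qw*qw - pw*pw, 2*pw*qw)))) (Cof 4))
            (Cmul (z1, z2) (z1, z2)))))
  = Dl pw qw pv qv * (2 * G1 z1 z2 pw qw pv qv + Pi2 z1 z2 pw qw pv qv).
Proof.
  transitivity (Dl pw qw pv qv * (2 * G1 z1 z2 pw qw pv qv + Pi2 z1 z2 pw qw pv qv)
     + ((-1)*z1 + (3/2)*z1*z2 + (-2)*pv*qv*z2 + (3/2)*pv*qv*z2^2 + (-3/2)*pv*qv*z1^2 + (1/2)*pv*qv^3*z2^2 + (-1/2)*pv*qv^3*z1^2 + (2)*pv^2*z1 + (-3)*pv^2*z1*z2 + (-3)*pv^2*qv^2*z1*z2 + (-3/2)*pv^3*qv*z2^2 + (3/2)*pv^3*qv*z1^2 + (1)*pv^4*z1*z2 + (1/2)*qw^2*z1*z2 + (1/2)*qw^2*pv*qv*z2^2 + (-1/2)*qw^2*pv*qv*z1^2 + (-1)*qw^2*pv^2*z1*z2 + (1)*pw*qw*z2^2 + (-1)*pw*qw*z1^2 + (-1/2)*pw*qw*qv^2*z2^2 + (1/2)*pw*qw*qv^2*z1^2 + (-2)*pw*qw*pv*qv*z1*z2 + (-3/2)*pw*qw*pv^2*z2^2 + (3/2)*pw*qw*pv^2*z1^2 + (-7/2)*pw^2*z1*z2 + (3)*pw^2*qv^2*z1*z2 + (-1/2)*pw^2*pv*qv*z2^2 + (1/2)*pw^2*pv*qv*z1^2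 + (4)*pw^2*pv^2*z1*z2) * cw + ((1)*z1 + (-3/2)*z1*z2 + (-1/2)*qv^2*z1*z2 + (-1/2)*pv*qv*z2^2 + (1/2)*pv*qv*z1^2 + (1/2)*pv^2*z1*z2 + (2)*pw*qw*z2 + (-2)*pw*qw*z2^2 + (2)*pw*qw*z1^2 + (-1/2)*pw*qw*qv^2*z2^2 + (1/2)*pw*qw*qv^2*z1^2 + (2)*pw*qw*pv*qv*z1*z2 + (1/2)*pw*qw*pv^2*z2^2 + (-1/2)*pw*qw*pv^2*z1^2 + (-2)*pw^2*z1 + (6)*pw^2*z1*z2 + (1)*pw^2*qv^2*z1*z2 + (1)*pw^2*pv*qv*z2^2 + (-1)*pw^2*pv*qv*z1^2 + (-1)*pw^2*pv^2*z1*z2 + (2)*pw^3*qw*z2^2 + (-2)*pw^3*qw*z1^2 + (-4)*pw^4*z1*z2) * cv).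
  - unfold cw, cv. cx. dfs. field.
  - rewrite cw0, cv0. ring.
Qed.

Lemma Re2_eq : Re (Cmul (Csub (Cconj (qw*qw - pw*pw, 2*pw*qw)) (Cconj (qv*qv - pv*pv, 2*pv*qv))) (z1, z2))
  = - (Dl pw qw pv qv * (2 * G1 z1 z2 pw qw pv qv)).
Proof.
  transitivity (- (Dl pw qw pv qv * (2 * G1 z1 z2 pw qw pv qv)) + ((1)*z1 + (2)*pv*qv*z2 + (-2)*pv^2*z1) * cw + ((-1)*z1 + (-2)*pw*qw*z2 + (2)*pw^2*z1) * cv).
  - unfold cw, cv. cx. dfs. ring.
  - rewrite cw0, cv0. ring.
Qed.

Lemma norm_diff : (qw*qw - pw*pw - (qv*qv - pv*pv))^2 + (2*pw*qw - 2*pv*qv)^2 = 4 * (Dl pw qw pv qv)^2.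
Proof.
  transitivity (4 * (Dl pw qw pv qv)^2 + ((1) + (-2)*qv^2 + (-2)*pv^2 + (1)*qw^2 + (1)*pw^2) * cw + ((-1) + (1)*qv^2 + (1)*pv^2) * cv).
  - unfold cw, cv. dfs. ring.
  - rewrite cw0, cv0. ring.
Qed.

Lemma I2_eq : let h := 1 + z2 in
  let G := G1 z1 z2 pw qw pv qv + G2 z1 z2 pw qw pv qv in
  let Pi := 2 * G1 z1 z2 pw qw pv qv + Pi2 z1 z2 pw qw pv qv in
  2 * G - Pi * (h - A0 pw qw pv qv * G) =
  - z2 * Pi2 z1 z2 pw qw pv qv + A0 pw qw pv qv * (Pi2 z1 z2 pw qw pv qv * G1 z1 z2 pw qw pv qv
     + 2 * G1 z1 z2 pw qw pv qv * G2 z1 z2 pw qw pv qv + Pi2 z1 z2 pw qw pv qv * G2 z1 z2 pw qw pv qv).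
Proof.
  intros h G Pi.
  transitivity (- z2 * Pi2 z1 z2 pw qw pv qv + A0 pw qw pv qv * (Pi2 z1 z2 pw qw pv qv * G1 z1 z2 pw qw pv qv
     + 2 * G1 z1 z2 pw qw pv qv * G2 z1 z2 pw qw pv qv + Pi2 z1 z2 pw qw pv qv * G2 z1 z2 pw qw pv qv)
     + ((-1/2)*qw*qv*z2^2 + (1/2)*qw*qv*z1^2 + (2)*qw*qv^3*z2^2 + (1)*qw*pv*z1*z2 + (-4)*qw*pv*qv^2*z1*z2 + (2)*qw*pv^2*qv*z1^2 + (3)*pw*qv*z1*z2 + (-4)*pw*qv^3*z1*z2 + (3/2)*pw*pv*z2^2 + (-3/2)*pw*pv*z1^2 + (-2)*pw*pv*qv^2*z2^2 + (4)*pw*pv*qv^2*z1^2 + (2)*pw*pv^3*z1^2) * cw + ((3/2)*qw*qv*z2^2 + (1/2)*qw*qv*z1^2 + (-1)*qw*pv*z1*z2 + (-3)*pw*qv*z1*z2 + (-1/2)*pw*pv*z2^2 + (5/2)*pw*pv*z1^2 + (-2)*pw^2*qw*qv*z2^2 + (2)*pw^2*qw*qv*z1^2 + (4)*pw^2*qw*pv*z1*z2 + (4)*pw^3*qv*z1*z2 + (2)*pw^3*pv*z2^2 + (-2)*pw^3*pv*z1^2) * cv).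
  - unfold cw, cv, h, G, Pi. dfs. field.
  - rewrite cw0, cv0. ring.
Qed.

Lemma X_bound : X1 pw qw pv qv ^ 2 + X2 pw qw pv qv ^ 2 <= 16.
Proof.
  assert (E : 16 - (X1 pw qw pv qv ^ 2 + X2 pw qw pv qv ^ 2) =
     4 * (pw*qv - pv*qw)^2 + 8 * pv^2 + 8 * pw^2 + ((-9)*qv^2 + (-6)*qv^4 + (-1)*qv^6 + (-9)*pv^2 + (-3)*pv^2*qv^4 + (6)*pv^4 + (-3)*pv^4*qv^2 + (-1)*pv^6 + (-5)*qw^2*qv^2 + (-2)*qw^2*qv^4 + (-5)*qw^2*pv^2 + (2)*qw^2*pv^4 + (-1)*qw^4*qv^2 + (-1)*qw^4*pv^2 + (-8)*pw*qw*pv*qv^3 + (-8)*pw*qw*pv^3*qv + (3)*pw^2*qv^2 + (2)*pw^2*qv^4 + (3)*pw^2*pv^2 + (-2)*pw^2*pv^4 + (-2)*pw^2*qw^2*qv^2 + (-2)*pw^2*qw^2*pv^2 + (-1)*pw^4*qv^2 + (-1)*pw^4*pv^2 - 4*pv^2) * cw + ((-16) + (-7)*qv^2 + (-1)*qv^4 + (5)*pv^2 + (-2)*pv^2*qv^2 + (-1)*pv^4 + (-8)*pw*qw*pv*qv + (12)*pw^2 + (4)*pw^2*qv^2 + (-4)*pw^2*pv^2 - 4*pw^2) * cv).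
  { unfold cw, cv. dfs. ring. }
  rewrite cw0, cv0, !Rmult_0_r, !Rplus_0_r in E.
  pose proof (pow2_ge_0 (pw*qv-pv*qw)); pose proof (pow2_ge_0 pv); pose proof (pow2_ge_0 pw); lra.
Qed.

Lemma A0Dl : A0 pw qw pv qv ^ 2 + Dl pw qw pv qv ^ 2 = 1.
Proof.
  transitivity (1 + (pv*pv+qv*qv) * cw + cv).
  - unfold cw, cv. dfs. ring.
  - rewrite cw0, cv0. ring.
Qed.

Lemma RI1 : ReW pw qw pv qv ^ 2 + ImW pw qw pv qv ^ 2 = 1.
Proof.
  transitivity (1 + (pv*pv+qv*qv) * cw + cv).
  - unfold cw, cv. dfs. ring.
  - rewrite cw0, cv0. ring.
Qed.
End Ids.

Lemma abs_le_inv : forall x y, Rabs x <= y -> -y <= x <= y.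
Proof. intros x y H. unfold Rabs in H. destruct (Rcase_abs x); lra. Qed.

Lemma atan_pos : forall x, 0 < x -> 0 < atan x.
Proof. intros. rewrite <- atan_0. apply atan_increasing; auto. Qed.

Lemma LBpos : forall x z1 h K, 2*K < x -> Rabs z1 <= K - 1 -> 0 < h <= K ->
  Rabs (atan ((x - z1)/h) - atan x) <= 3*K/x.
Proof.
  intros x z1 h K Hx Hz Hh.
  apply abs_le_inv in Hz.
  assert (HK : 1 <= K) by lra.
  assert (Hxz : x/2 < x - z1) by lra.
  set (y := (x - z1)/h).
  assert (Hy : 0 < y) by (unfold y; apply Rdiv_lt_0_compat; lra).
  assert (Hx0 : 0 < x) by lra.
  assert (E : atan y - atan x = atan (/x) - atan (/y)).
  { rewrite !atan_inv by auto. ring. }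
  rewrite E.
  pose proof (atan_le_id (/x) (Rlt_le _ _ (Rinv_0_lt_compat _ Hx0))).
  pose proof (atan_le_id (/y) (Rlt_le _ _ (Rinv_0_lt_compat _ Hy))).
  pose proof (atan_pos (/x) (Rinv_0_lt_compat _ Hx0)).
  pose proof (atan_pos (/y) (Rinv_0_lt_compat _ Hy)).
  assert (Hiy : / y <= 2*K/x).
  { unfold y. rewrite Rinv_div. apply (Rmult_le_reg_r (x * (x - z1))). nra.
    field_simplify; try lra. nra. }
  assert (/x + 2*K/x <= 3*K/x).
  { unfold Rdiv. rewrite (Rmult_comm 3), Rmult_assoc.
    assert (0 < /x) by (apply Rinv_0_lt_compat; lra). nra. }
  apply Rabs_le; split; lra.
Qed.

Lemma LB : forall P Q z1 h K, P*P+Q*Q = 1 -> Q <> 0 -> Rabs z1 <= K - 1 -> 0 < h <= K -> 1 <= K ->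
  Rabs (atan ((P/Q - z1)/h) - atan (P/Q)) <= 12*K*Rabs Q.
Proof.
  intros P Q z1 h K HPQ HQ Hz Hh HK.
  assert (HQa : 0 < Rabs Q) by (apply Rabs_pos_lt; auto).
  assert (HP2 : Rabs P * Rabs P = P*P) by (rewrite <- Rabs_mult; apply Rabs_pos_eq; nra).
  assert (HQ2 : Rabs Q * Rabs Q = Q*Q) by (rewrite <- Rabs_mult; apply Rabs_pos_eq; nra).
  pose proof (Rabs_pos P).
  destruct (Rle_dec (Rabs P) (2*K*Rabs Q)) as [Hs|Hs].
  - assert (H1 : 1 <= 5*(K*Rabs Q)*(K*Rabs Q)).
    { assert (Rabs P * Rabs P <= (2*K*Rabs Q)*(2*K*Rabs Q)) by (apply Rmult_le_compat; lra).
      assert (Rabs Q * Rabs Q <= (K*Rabs Q)*(K*Rabs Q)) by (apply Rmult_le_compat; nra).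
      nra. }
    assert (H2 : 1/3 <= K * Rabs Q).
    { destruct (Rle_dec (1/3) (K*Rabs Q)) as [h2|h2]; auto. exfalso.
      assert (0 <= K*Rabs Q) by nra. nra. }
    pose proof (atan_bound ((P/Q - z1)/h)). pose proof (atan_bound (P/Q)). pose proof PI_4.
    apply Rabs_le. split; lra.
  - assert (HPb : 1/2 < Rabs P).
    { assert (2*Rabs Q < Rabs P) by nra.
      assert (4 * (Q*Q) < P*P) by nra. nra. }
    set (x := P/Q).
    assert (Hxa : Rabs x * Rabs Q = Rabs P).
    { rewrite <- Rabs_mult. unfold x. f_equal. field. auto. }
    assert (Hxb : 2*K < Rabs x) by nra.
    assert (Hfin : 3*K/Rabs x <= 12*K*Rabs Q).
    { apply (Rmult_le_reg_r (Rabs x)); [lra|].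
      unfold Rdiv. rewrite Rmult_assoc, Rinv_l by lra. nra. }
    destruct (Rle_dec 0 x) as [Hx0|Hx0].
    + rewrite Rabs_pos_eq in Hxb, Hfin by auto.
      eapply Rle_trans; [apply (LBpos x z1 h K); try lra; auto|]. auto.
    + rewrite Rabs_left in Hxb, Hfin by lra.
      assert (E : atan ((x - z1) / h) - atan x = - (atan ((-x - (-z1))/h) - atan (-x))).
      { rewrite !atan_opp. replace ((-x - - z1)/h) with (- ((x - z1)/h)) by (field; lra).
        rewrite atan_opp. ring. }
      rewrite E, Rabs_Ropp.
      eapply Rle_trans; [apply (LBpos (-x) (-z1) h K); try lra; rewrite Rabs_Ropp; auto|]. auto.
Qed.

Definition Sfun (z1 z2 pw qw pv qv : R) : R :=
  if Req_EM_T (pw*qv - pv*qw) 0 then 0 else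
  2 * (atan ((pw*pv + qw*qv)/(pw*qv - pv*qw))
       - atan (((pw - z1*qw)*(pv - z1*qv) + (1+z2)*(1+z2)*qw*qv)/((1+z2)*(pw*qv - pv*qw)))).

Lemma abs_mul_le : forall x y a b, Rabs x <= a -> Rabs y <= b -> Rabs (x*y) <= a*b.
Proof.
  intros. rewrite Rabs_mult. apply Rmult_le_compat; auto using Rabs_pos.
Qed.

Lemma abs_sq_le : forall x y, x*x <= y*y -> 0 <= y -> Rabs x <= y.
Proof.
  intros x y H Hy. assert (Rabs x <= Rabs y) by (apply Rsqr_le_abs_0; unfold Rsqr; auto).
  rewrite (Rabs_pos_eq y) in H0; auto.
Qed.

Lemma div_bound : forall N D M c, 0 < c -> c <= D -> Rabs N <= M -> Rabs (N / D) <= M / c.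
Proof.
  intros N D M c Hc HD HN. unfold Rdiv. rewrite Rabs_mult, Rabs_inv, (Rabs_pos_eq D) by lra.
  apply Rmult_le_compat; auto using Rabs_pos.
  left; apply Rinv_0_lt_compat; lra. apply Rinv_le_contravar; lra.
Qed.

Lemma cube_bound : forall r B, Rabs r <= B -> Rabs r ^ 3 <= B ^ 3.
Proof. intros. apply pow_incr. split; auto using Rabs_pos. Qed.

Section Est.
Variables (z1 z2 pw qw pv qv : R).
Hypothesis Hw : pw*pw + qw*qw = 1.
Hypothesis Hv : pv*pv + qv*qv = 1.
Hypothesis Hh : 0 < 1 + z2.
Let nz := sqrt (z1*z1 + z2*z2).

Lemma nz_sq : nz * nz = z1*z1 + z2*z2.
Proof. apply sqrt_sqrt. nra. Qed.
Lemma nz_pos : 0 <= nz.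
Proof. apply sqrt_pos. Qed.
Lemma z1_le : Rabs z1 <= nz.
Proof. apply abs_sq_le. rewrite nz_sq. nra. apply nz_pos. Qed.
Lemma z2_le : Rabs z2 <= nz.
Proof. apply abs_sq_le. rewrite nz_sq. nra. apply nz_pos. Qed.

Lemma G1_le : Rabs (G1 z1 z2 pw qw pv qv) <= nz.
Proof.
  apply abs_sq_le; [|apply nz_pos]. rewrite nz_sq.
  pose proof (RI1 pw qw pv qv Hw Hv). unfold G1.
  set (i := ImW pw qw pv qv) in *. set (r := ReW pw qw pv qv) in *.
  assert (E : (z1*i - z2*r)*(z1*i - z2*r) + (z1*r + z2*i)*(z1*r+z2*i) = (z1*z1+z2*z2)*(r^2+i^2)) by ring.
  rewrite H in E. pose proof (Rle_0_sqr (z1*r+z2*i)). unfold Rsqr in *. lra.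
Qed.

Lemma G2_le : Rabs (G2 z1 z2 pw qw pv qv) <= nz * nz.
Proof.
  unfold G2. rewrite nz_sq.
  replace (- (z1 * z1 + z2 * z2) * qw * qv) with ((z1*z1+z2*z2) * (-(qw*qv))) by ring.
  rewrite Rabs_mult, (Rabs_pos_eq (z1*z1+z2*z2)) by nra.
  assert (Rabs (-(qw*qv)) <= 1).
  { rewrite Rabs_Ropp. apply abs_sq_le; [|lra]. nra. }
  assert (0 <= z1*z1+z2*z2) by nra. nra.
Qed.

Lemma Pi2_le : Rabs (Pi2 z1 z2 pw qw pv qv) <= 2 * (nz * nz).
Proof.
  unfold Pi2. rewrite Rabs_mult.
  replace (Rabs (- (1/2))) with (1/2) by (rewrite Rabs_Ropp, Rabs_pos_eq; lra).
  pose proof (X_bound pw qw pv qv Hw Hv).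
  set (x1 := X1 pw qw pv qv) in *. set (x2 := X2 pw qw pv qv) in *.
  assert (Rabs (x1 * (z1 * z1 - z2 * z2) - x2 * (2 * z1 * z2)) <= 4 * (nz*nz)).
  { apply abs_sq_le; [|pose proof nz_pos; nra]. 
    assert (E : (x1 * (z1 * z1 - z2 * z2) - x2 * (2 * z1 * z2))^2 + (x1 * (2*z1*z2) + x2 * (z1*z1 - z2*z2))^2
                = (x1^2 + x2^2) * ((nz*nz)*(nz*nz))) by (rewrite nz_sq; ring).
    pose proof (pow2_ge_0 (x1 * (2*z1*z2) + x2 * (z1*z1 - z2*z2))).
    assert (0 <= (nz*nz)*(nz*nz)) by (pose proof nz_pos; nra).
    nra. }
  lra.
Qed.

Lemma A0_le : Rabs (A0 pw qw pv qv) <= 1.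
Proof. pose proof (A0Dl pw qw pv qv Hw Hv). apply abs_sq_le; [|lra]. pose proof (pow2_ge_0 (Dl pw qw pv qv)). nra. Qed.
Lemma Dl_le : Rabs (Dl pw qw pv qv) <= 1.
Proof. pose proof (A0Dl pw qw pv qv Hw Hv). apply abs_sq_le; [|lra]. pose proof (pow2_ge_0 (A0 pw qw pv qv)). nra. Qed.


Lemma S_small : nz <= 1/3 -> Dl pw qw pv qv <> 0 ->
  let G := G1 z1 z2 pw qw pv qv + G2 z1 z2 pw qw pv qv in
  let Den := (1 + z2) - A0 pw qw pv qv * G in
  2/9 <= Den /\ Sfun z1 z2 pw qw pv qv = 2 * atan (Dl pw qw pv qv * G / Den).
Proof.
  intros Hnz HD G Den.
  pose proof G1_le. pose proof G2_le. pose proof A0_le. pose proof z2_le. pose proof nz_pos.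
  pose proof (A0Dl pw qw pv qv Hw Hv) as Hid.
  set (a0 := A0 pw qw pv qv) in *. set (dl := Dl pw qw pv qv) in *.
  assert (HG : Rabs G <= nz + nz*nz) by (unfold G; eapply Rle_trans; [apply Rabs_triang|]; lra).
  assert (HaG : Rabs (a0 * G) <= nz + nz*nz).
  { replace (nz + nz*nz) with (1 * (nz+nz*nz)) by ring. apply abs_mul_le; auto. }
  apply abs_le_inv in HaG. pose proof (abs_le_inv _ _ H2).
  assert (nz*nz <= 1/9) by nra.
  assert (HDen : 2/9 <= Den) by (unfold Den; lra).
  split; [exact HDen|].
  unfold Sfun. destruct (Req_EM_T _ 0) as [E|E]; [exfalso; apply HD; unfold dl, Dl; lra|].
  assert (HA1 : (pw - z1 * qw) * (pv - z1 * qv) + (1 + z2) * (1 + z2) * qw * qv = (1+z2)*a0 - G).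
  { unfold G, a0. unfold G1, G2, A0, ImW, ReW. ring. }
  rewrite HA1.
  change (pw * qv - pv * qw) with dl. change (pw * pv + qw * qv) with a0.
  assert (Hdd : dl*dl > 0) by (pose proof (Rsqr_pos_lt dl HD); unfold Rsqr in *; lra).
  assert (HDen' : (1+z2)*dl*dl + a0*((1+z2)*a0 - G) = Den).
  { assert (ED : Den = (1+z2)*(a0^2+dl^2) - a0*G) by (unfold Den; rewrite Hid; ring). rewrite ED. ring. }
  assert (Hz2 : 1 + z2 <> 0) by lra.
  rewrite atan_minus_formula.
  - f_equal. f_equal. rewrite <- HDen'. field. repeat split; try lra.
  - replace (1 + a0 / dl * (((1 + z2) * a0 - G) / ((1 + z2) * dl))) with (Den / ((1+z2)*(dl*dl))).
    + apply Rdiv_lt_0_compat; [lra|]. apply Rmult_lt_0_compat; lra.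
    + rewrite <- HDen'. field. lra.
Qed.


Lemma small_est : nz <= 1/3 ->
  Rabs (Sfun z1 z2 pw qw pv qv - Dl pw qw pv qv * (2 * G1 z1 z2 pw qw pv qv + Pi2 z1 z2 pw qw pv qv))
     <= 1000 * Rabs (Dl pw qw pv qv) * nz^3 /\
  Rabs (Sfun z1 z2 pw qw pv qv - Dl pw qw pv qv * (2 * G1 z1 z2 pw qw pv qv))
     <= 1000 * Rabs (Dl pw qw pv qv) * nz^2 /\
  Rabs (Sfun z1 z2 pw qw pv qv) <= 1000 * Rabs (Dl pw qw pv qv) * nz.
Proof.
  intros Hnz.
  pose proof G1_le. pose proof G2_le. pose proof A0_le. pose proof z2_le. pose proof nz_pos.
  pose proof Pi2_le. pose proof Dl_le.
  destruct (Req_EM_T (Dl pw qw pv qv) 0) as [HD|HD].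
  - assert (Sfun z1 z2 pw qw pv qv = 0).
    { unfold Sfun. destruct (Req_EM_T _ 0); auto. exfalso. apply n. unfold Dl in HD. lra. }
    rewrite H6, HD, !Rmult_0_l, Rabs_R0, Rminus_0_r, Rabs_R0, Rmult_0_r, !Rmult_0_l. lra.
  - destruct (S_small Hnz HD) as [HDen HS]. rewrite HS.
    pose proof (I2_eq z1 z2 pw qw pv qv Hw Hv) as HI2. cbv zeta in HI2.
    set (g1 := G1 z1 z2 pw qw pv qv) in *. set (g2 := G2 z1 z2 pw qw pv qv) in *.
    set (a0 := A0 pw qw pv qv) in *. set (dl := Dl pw qw pv qv) in *.
    set (p2 := Pi2 z1 z2 pw qw pv qv) in *.
    set (G := g1 + g2) in *. set (Den := 1 + z2 - a0 * G) in *.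
    set (r := dl * G / Den).
    set (e := Rabs dl). set (n := nz) in *.
    assert (He : 0 <= e) by apply Rabs_pos.
    assert (HG : Rabs G <= (4/3) * n).
    { unfold G. eapply Rle_trans; [apply Rabs_triang|]. nra. }
    assert (Hr : Rabs r <= 6 * e * n).
    { unfold r. replace (6*e*n) with ((e * ((4/3)*n)) / (2/9)) by field.
      apply div_bound; try lra. apply abs_mul_le; auto. unfold e; lra. }
    assert (Hat : Rabs (atan r - r) <= 72 * e * n^3).
    { eapply Rle_trans; [apply atan_taylor|].
      pose proof (cube_bound _ _ Hr).
      assert ((6*e*n)^3 = 216 * e^3 * n^3) by ring.
      assert (e^3 <= e) by (unfold e in *; nra).
      assert (0 <= n^3) by (apply pow_le; auto).
      nra. }
    split; [|split].
    +
      assert (E : 2 * atan r - dl * (2 * g1 + p2) = 2 * (atan r - r) +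
                  dl * (- z2 * p2 + a0 * (p2 * g1 + 2 * g1 * g2 + p2 * g2)) / Den).
      { rewrite <- HI2. unfold r. field. lra. }
      rewrite E.
      assert (HN : Rabs (- z2 * p2 + a0 * (p2 * g1 + 2 * g1 * g2 + p2 * g2)) <= 7 * n^3).
      { eapply Rle_trans; [apply Rabs_triang|].
        assert (Rabs (-z2 * p2) <= n * (2 * (n*n))) by (apply abs_mul_le; auto; rewrite Rabs_Ropp; auto).
        assert (Rabs (p2*g1) <= (2*(n*n)) * n) by (apply abs_mul_le; auto).
        assert (Rabs (2*g1*g2) <= (2*n) * (n*n)).
        { apply abs_mul_le; auto. rewrite Rabs_mult, (Rabs_pos_eq 2) by lra. lra. }
        assert (Rabs (p2*g2) <= (2*(n*n)) * (n*n)) by (apply abs_mul_le; auto).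
        assert (Rabs (p2 * g1 + 2 * g1 * g2 + p2 * g2) <= 4*n^3 + 2*n^4).
        { eapply Rle_trans; [apply Rabs_triang|]. eapply Rle_trans; [apply Rplus_le_compat_r; apply Rabs_triang|]. 
          simpl; nra. }
        assert (Rabs (a0 * (p2 * g1 + 2 * g1 * g2 + p2 * g2)) <= 1 * (4*n^3 + 2*n^4)) by (apply abs_mul_le; auto).
        assert (0 <= n^3) by (apply pow_le; auto).
        assert (n^4 <= n^3/3) by (replace (n^4) with (n * n^3) by ring; nra).
        replace (n * (2 * (n*n))) with (2*n^3) in * by ring. lra. }
      assert (HQ : Rabs (dl * (- z2 * p2 + a0 * (p2 * g1 + 2 * g1 * g2 + p2 * g2)) / Den) <= (e * (7*n^3)) / (2/9)).
      { apply div_bound; try lra. apply abs_mul_le; auto. unfold e; lra. }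
      eapply Rle_trans; [apply Rabs_triang|].
      rewrite Rabs_mult, (Rabs_pos_eq 2) by lra.
      assert (0 <= e * n^3) by (apply Rmult_le_pos; auto; apply pow_le; auto).
      replace (e * (7*n^3) / (2/9)) with (63/2 * (e * n^3)) in HQ by field.
      fold e. nra.
    +
      assert (E : 2 * atan r - dl * (2 * g1) = 2 * (atan r - r) +
                  2 * (dl * (g2 - z2 * g1 + a0 * g1 * G) / Den)).
      { unfold r, Den, G. field. fold G. fold Den. lra. }
      rewrite E.
      assert (HN : Rabs (g2 - z2 * g1 + a0 * g1 * G) <= (10/3) * (n*n)).
      { assert (Rabs (z2*g1) <= n * n) by (apply abs_mul_le; auto).
        assert (Rabs (a0 * g1 * G) <= (1 * n) * ((4/3)*n)) by (apply abs_mul_le; auto; apply abs_mul_le; auto).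
        eapply Rle_trans; [apply Rabs_triang|].
        unfold Rminus. eapply Rle_trans; [apply Rplus_le_compat_r; apply Rabs_triang|].
        rewrite Rabs_Ropp. lra. }
      assert (HQ : Rabs (dl * (g2 - z2 * g1 + a0 * g1 * G) / Den) <= (e * ((10/3)*(n*n))) / (2/9)).
      { apply div_bound; try lra. apply abs_mul_le; auto. unfold e; lra. }
      eapply Rle_trans; [apply Rabs_triang|].
      rewrite !Rabs_mult, (Rabs_pos_eq 2) by lra.
      assert (0 <= e * n^2) by (apply Rmult_le_pos; auto; apply pow_le; auto).
      replace (e * ((10/3)*(n*n)) / (2/9)) with (15 * (e * n^2)) in HQ by (simpl; field).
      assert (e * n^3 <= e * n^2 / 3) by (simpl; nra).
      fold e. nra.
    +
      rewrite Rabs_mult, (Rabs_pos_eq 2) by lra.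
      pose proof (atan_abs_le r).
      assert (0 <= e * n) by nra.
      fold e. nra.
Qed.

Lemma large_est : pv * pv = 1 -> qv = 0 -> 1/3 < nz ->
  Rabs (Sfun z1 z2 pw qw pv qv - Dl pw qw pv qv * (2 * G1 z1 z2 pw qw pv qv + Pi2 z1 z2 pw qw pv qv))
     <= 1000 * Rabs (Dl pw qw pv qv) * nz^3 /\
  Rabs (Sfun z1 z2 pw qw pv qv - Dl pw qw pv qv * (2 * G1 z1 z2 pw qw pv qv))
     <= 1000 * Rabs (Dl pw qw pv qv) * nz^2 /\
  Rabs (Sfun z1 z2 pw qw pv qv) <= 1000 * Rabs (Dl pw qw pv qv) * nz.
Proof.
  intros Hpv Hqv Hnz.
  pose proof G1_le. pose proof z1_le. pose proof z2_le. pose proof nz_pos.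
  pose proof Pi2_le. pose proof Dl_le.
  destruct (Req_EM_T (Dl pw qw pv qv) 0) as [HD|HD].
  - assert (Sfun z1 z2 pw qw pv qv = 0).
    { unfold Sfun. destruct (Req_EM_T _ 0); auto. exfalso. apply n. unfold Dl in HD. lra. }
    rewrite H5, HD, !Rmult_0_l, Rabs_R0, Rminus_0_r, Rabs_R0, Rmult_0_r, !Rmult_0_l. lra.
  - assert (Hqw : qw <> 0). { intro E. apply HD. unfold Dl. rewrite E, Hqv. ring. }
    assert (Hpv0 : pv <> 0). { intro E. rewrite E in Hpv. lra. }
    assert (HDe : Rabs (Dl pw qw pv qv) = Rabs qw).
    { unfold Dl. rewrite Hqv. replace (pw*0 - pv*qw) with (pv * (-qw)) by ring.
      rewrite Rabs_mult, Rabs_Ropp. replace (Rabs pv) with 1. ring.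
      assert (Rabs pv * Rabs pv = 1) by (rewrite <- Rabs_mult, Hpv; apply Rabs_R1).
      pose proof (Rabs_pos pv). nra. }
    assert (HS : Sfun z1 z2 pw qw pv qv = 2*(atan((pw/qw - z1)/(1+z2)) - atan(pw/qw))).
    { unfold Sfun. destruct (Req_EM_T _ 0) as [E|E]; [exfalso; apply HD; unfold Dl; lra|].
      rewrite Hqv.
      replace ((pw*pv + qw*0)/(pw*0 - pv*qw)) with (-(pw/qw)) by (field; auto).
      replace (((pw - z1*qw)*(pv - z1*0) + (1+z2)*(1+z2)*qw*0)/((1+z2)*(pw*0 - pv*qw)))
        with (-((pw/qw - z1)/(1+z2))) by (field; repeat split; auto; lra).
      rewrite !atan_opp. ring. }
    assert (HL : Rabs (atan((pw/qw - z1)/(1+z2)) - atan(pw/qw)) <= 12*(1+nz)*Rabs qw).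
    { apply LB; auto; try lra. split; auto. pose proof (abs_le_inv _ _ H1). lra. }
    rewrite HS. rewrite HDe in *.
    set (g1 := G1 z1 z2 pw qw pv qv) in *. set (dl := Dl pw qw pv qv) in *.
    set (p2 := Pi2 z1 z2 pw qw pv qv) in *. set (n := nz) in *.
    set (t := atan((pw/qw - z1)/(1+z2)) - atan(pw/qw)) in *.
    set (e := Rabs qw) in *.
    assert (He : 0 <= e) by apply Rabs_pos.
    assert (HS1 : Rabs (2*t) <= 96 * e * n) by (rewrite Rabs_mult, Rabs_pos_eq by lra; nra).
    assert (Hg : Rabs (dl * (2*g1)) <= e * (2*n)).
    { apply abs_mul_le. rewrite HDe; lra. rewrite Rabs_mult, Rabs_pos_eq by lra. lra. }
    assert (Hp : Rabs (dl * (2*g1 + p2)) <= e * (2*n + 2*(n*n))).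
    { apply abs_mul_le. rewrite HDe; lra. eapply Rle_trans; [apply Rabs_triang|].
      rewrite Rabs_mult, (Rabs_pos_eq 2) by lra. lra. }
    assert (n <= 3*(n*n)) by nra.
    assert (n*n <= 3*n^3) by (simpl; nra).
    assert (0 <= e*n) by nra. assert (0 <= e*(n*n)) by nra.
    split; [|split].
    + unfold Rminus. eapply Rle_trans; [apply Rabs_triang|]. rewrite Rabs_Ropp.
      assert (e*n <= 9*(e*n^3)) by nra. assert (e*(n*n) <= 3*(e*n^3)) by nra. nra.
    + unfold Rminus. eapply Rle_trans; [apply Rabs_triang|]. rewrite Rabs_Ropp.
      assert (e*n <= 3*(e*n^2)) by (simpl; nra). simpl in *. nra.
    + nra.
Qed.
End Est.

Lemma sq_eq_nonneg : forall x y, 0 <= x -> 0 <= y -> x*x = y*y -> x = y.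
Proof. intros. apply Rsqr_inj; auto. Qed.

Lemma half_angle : forall v1 v2, v1*v1+v2*v2 = 1 ->
  exists p q, p*p+q*q = 1 /\ v1 = q*q - p*p /\ v2 = 2*p*q.
Proof.
  intros v1 v2 H.
  assert (Hb : -1 <= v1 <= 1) by nra.
  set (q := sqrt ((1+v1)/2)). set (s := sqrt ((1-v1)/2)).
  assert (Hq : q*q = (1+v1)/2) by (apply sqrt_sqrt; lra).
  assert (Hs : s*s = (1-v1)/2) by (apply sqrt_sqrt; lra).
  assert (Hq0 : 0 <= q) by apply sqrt_pos. assert (Hs0 : 0 <= s) by apply sqrt_pos.
  assert (Hsq : (2*s*q)*(2*s*q) = v2*v2) by (replace ((2*s*q)*(2*s*q)) with (4*(s*s)*(q*q)) by ring; rewrite Hq, Hs; nra).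
  destruct (Rle_dec 0 v2) as [Hv|Hv].
  - exists s, q. split; [lra|split; [lra|]].
    symmetry. apply sq_eq_nonneg; auto. nra.
  - exists (-s), q. split; [nra|split; [nra|]].
    assert (E : 2*s*q = -v2) by (apply sq_eq_nonneg; [nra|lra|nra]). nra.
Qed.

Lemma pair_Uh : forall p q, p*p+q*q = 1 -> (q*q - p*p, 2*p*q) = Uh p q.
Proof. intros p q H. unfold Uh. rewrite H. f_equal; field. Qed.

Lemma unit_of_Cnorm : forall x y, Cnorm (x, y) = 1 -> x*x + y*y = 1.
Proof.
  intros x y H. rewrite Cnorm_pair in H.
  assert (0 <= x*x+y*y) by nra.
  rewrite <- (sqrt_sqrt (x*x+y*y)) by auto. rewrite H. ring.
Qed.

Theorem mainTheorem11 :
  exists c0 : R,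
  forall (a b c d : R) (z v w : Cx),
    a * d - b * c > 0 ->
    inH (Cadd Ci z) ->
    mobH a b c d (Some (Cadd Ci z)) = Some Ci ->
    Cnorm v = 1 -> Cnorm w = 1 ->
    (Cnorm z <= 1 / 3 \/ v = Cof (-1)) ->
    let A := ash a b c d v w in
    let eps3 := A - Re (Cmul (Csub (Cconj w) (Cconj v))
                  (Csub (Copp z)
                     (Cmul (Cdiv (Cmul Ci (Cadd (Cadd (Cof 2) (Cconj v)) (Cconj w))) (Cof 4))
                           (Cmul z z)))) in
    let eps2 := A + Re (Cmul (Csub (Cconj w) (Cconj v)) z) in
    let eps1 := A in
    (Rabs eps3 <= c0 * Cnorm (Csub w v) * Cnorm z ^ 3 /\
     c0 * Cnorm (Csub w v) * Cnorm z ^ 3 <= 2 * c0 * Cnorm z ^ 3) /\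
    (Rabs eps2 <= c0 * Cnorm (Csub w v) * Cnorm z ^ 2 /\
     c0 * Cnorm (Csub w v) * Cnorm z ^ 2 <= 2 * c0 * Cnorm z ^ 2) /\
    (Rabs eps1 <= c0 * Cnorm (Csub w v) * Cnorm z /\
     c0 * Cnorm (Csub w v) * Cnorm z <= 2 * c0 * Cnorm z).
Proof.
  exists 500.
  intros a b c d [z1 z2] [v1 v2] [w1 w2] Hdet HinH Hmob Hv Hw Hcase.
  cbv zeta.
  assert (Hh : 0 < 1 + z2).
  { unfold inH, Cadd, Ci, Re, Im in HinH; simpl in HinH. lra. }
  assert (Hbd : b = - c * (1+z2) - a * z1 /\ d = a * (1+z2) - c * z1).
  { revert Hmob. unfold mobH, mobius. cbv zeta.
    destruct (Req_EM_T _ 0) as [E|E]; intro Hmob; [discriminate|].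
    injection Hmob as Hm1 Hm2.
    unfold Cdiv, Cinv, Cmul, Cadd, Cof, Ci, Re, Im in Hm1, Hm2, E; simpl in Hm1, Hm2, E.
    set (D1 := c * (0 + z1) - 0 * (1 + z2) + d) in *.
    set (D2 := c * (1 + z2) + 0 * (0 + z1) + 0) in *.
    set (N1 := a * (0 + z1) - 0 * (1 + z2) + b) in *.
    set (N2 := a * (1 + z2) + 0 * (0 + z1) + 0) in *.
    assert (Hn : D1*D1 + D2*D2 <> 0).
    { intro Z. apply E. rewrite Cnorm_pair, Z. apply sqrt_0. }
    assert (E1 : N1 = - D2).
    { transitivity (D1 * (N1 * (D1 / (D1 * D1 + D2 * D2)) - N2 * (- D2 / (D1 * D1 + D2 * D2)))
                   - D2 * (N1 * (- D2 / (D1 * D1 + D2 * D2)) + N2 * (D1 / (D1 * D1 + D2 * D2)))).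
      - field. auto.
      - rewrite Hm1, Hm2. ring. }
    assert (E2 : N2 = D1).
    { transitivity (D2 * (N1 * (D1 / (D1 * D1 + D2 * D2)) - N2 * (- D2 / (D1 * D1 + D2 * D2)))
                   + D1 * (N1 * (- D2 / (D1 * D1 + D2 * D2)) + N2 * (D1 / (D1 * D1 + D2 * D2)))).
      - field. auto.
      - rewrite Hm1, Hm2. ring. }
    unfold N1, N2, D1, D2 in E1, E2. split; lra. }
  destruct Hbd as [Hb Hd]. subst b d.
  apply unit_of_Cnorm in Hv. apply unit_of_Cnorm in Hw.
  destruct (half_angle v1 v2 Hv) as [pv [qv [Hpq [Hv1 Hv2]]]].
  destruct (half_angle w1 w2 Hw) as [pw [qw [Hpqw [Hw1 Hw2]]]].
  assert (Hcase' : sqrt (z1*z1+z2*z2) <= 1/3 \/ (pv*pv = 1 /\ qv = 0)).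
  { destruct Hcase as [H|H]; [left; exact H|right].
    unfold Cof in H. injection H as H1 H2. subst v1 v2.
    assert (qv*qv = 0) by lra.
    assert (qv = 0) by nra. split; [lra|auto]. }
  clear Hcase.
  subst v1 v2 w1 w2.
  assert (HA : ash a (- c * (1 + z2) - a * z1) c (a * (1 + z2) - c * z1)
                 (qv*qv - pv*pv, 2*pv*qv) (qw*qw - pw*pw, 2*pw*qw) = Sfun z1 z2 pw qw pv qv).
  { rewrite (pair_Uh pv qv Hpq), (pair_Uh pw qw Hpqw).
    rewrite ash_formula; auto. }
  rewrite HA.
  rewrite (Re3_eq z1 z2 pw qw pv qv Hpqw Hpq).
  rewrite (Re2_eq z1 z2 pw qw pv qv Hpqw Hpq).
  assert (HN : Cnorm (Csub (qw*qw - pw*pw, 2*pw*qw) (qv*qv - pv*pv, 2*pv*qv)) = 2 * Rabs (Dl pw qw pv qv)).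
  { unfold Csub, Cadd, Copp, Re, Im; simpl. rewrite Cnorm_pair.
    pose proof (norm_diff pw qw pv qv Hpqw Hpq).
    replace ((qw * qw - pw * pw + - (qv * qv - pv * pv)) * (qw * qw - pw * pw + - (qv * qv - pv * pv)) +
             (2 * pw * qw + - (2 * pv * qv)) * (2 * pw * qw + - (2 * pv * qv)))
      with ((2 * Rabs (Dl pw qw pv qv)) * (2 * Rabs (Dl pw qw pv qv))).
    - apply sqrt_square. pose proof (Rabs_pos (Dl pw qw pv qv)). lra.
    - replace ((2 * Rabs (Dl pw qw pv qv)) * (2 * Rabs (Dl pw qw pv qv))) with (4 * (Rabs (Dl pw qw pv qv) * Rabs (Dl pw qw pv qv))) by ring.
      rewrite <- Rabs_mult, Rabs_pos_eq by nra. transitivity (4 * Dl pw qw pv qv ^ 2); [ring|]. rewrite <- H. ring. }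
  rewrite HN. rewrite Cnorm_pair.
  set (nz := sqrt (z1*z1+z2*z2)) in *.
  pose proof (Dl_le pw qw pv qv Hpqw Hpq). pose proof (Rabs_pos (Dl pw qw pv qv)).
  assert (Hnz : 0 <= nz) by apply sqrt_pos.
  assert (Hbounds : Rabs (Sfun z1 z2 pw qw pv qv - Dl pw qw pv qv * (2 * G1 z1 z2 pw qw pv qv + Pi2 z1 z2 pw qw pv qv))
     <= 1000 * Rabs (Dl pw qw pv qv) * nz^3 /\
  Rabs (Sfun z1 z2 pw qw pv qv - Dl pw qw pv qv * (2 * G1 z1 z2 pw qw pv qv))
     <= 1000 * Rabs (Dl pw qw pv qv) * nz^2 /\
  Rabs (Sfun z1 z2 pw qw pv qv) <= 1000 * Rabs (Dl pw qw pv qv) * nz).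
  { destruct (Rle_dec nz (1/3)) as [Hs|Hs].
    - apply small_est; auto.
    - apply Rnot_le_lt in Hs. destruct Hcase' as [H'|[H1 H2]]; [lra|]. apply large_est; auto. }
  destruct Hbounds as [B3 [B2 B1]].
  assert (P3 : 0 <= nz^3) by (apply pow_le; auto).
  assert (P2 : 0 <= nz^2) by (apply pow_le; auto).
  set (e := Rabs (Dl pw qw pv qv)) in *.
  replace (Sfun z1 z2 pw qw pv qv + - (Dl pw qw pv qv * (2 * G1 z1 z2 pw qw pv qv)))
    with (Sfun z1 z2 pw qw pv qv - Dl pw qw pv qv * (2 * G1 z1 z2 pw qw pv qv)) by ring.
  repeat split; try nra.
Qed.
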